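(* $(\mathbb{S},\sigma)$ is the final $F$-coalgebra in $\mathbf{Met_3}^{C}$.
   Context: A tripointed metric space is a set with three distinct points $T,L,R$ and a metric bounded by $1$ in which $T,L,R$ have pairwise distance $1$. $\mathbf{Met_3}^{C}$: tripointed metric spaces with continuous maps preserving $T,L,R$. Let $M=\{a,b,c\}$. For a tripointed metric space $X$, $M\times X$ has metric $d((m,x),(n,y))=\tfrac12d(x,y)$ if $m=n$ and $1$ otherwise; $M\otimes X$ is the quotient metric space by the equivalence relation generated by $(b,T)\sim(a,L)$, $(a,R)\sim(c,T)$, $(c,L)\sim(b,R)$, with elements $m\otimes x$ and distinguished points $a\otimes T,b\otimes L,c\otimes R$; $F=M\otimes-$ with $(M\otimes f)(m\otimes x)=m\otimes f(x)$. A coalgebra is $(X,e\colon X\to FX)$; it is final if every coalgebra has a unique coalgebra morphism $h$ into it ($\beta\circ h=Fh\circ\alpha$). The Sierpinski gasket $\mathbb{S}\subset\mathbb{R}^2$ is the unique nonempty compact set with $\mathbb{S}=\sigma_a(\mathbb{S})\cup\sigma_b(\mathbb{S})\cup\sigma_c(\mathbb{S})$, where $\sigma_a(x,y)=(x/2,y/2)+(1/4,\sqrt3/4)$, $\sigma_b(x,y)=(x/2,y/2)$, $\sigma_c(x,y)=(x/2,y/2)+(1/2,0)$; it carries the Euclidean metric and distinguished points $T=(1/2,\sqrt3/2)$, $L=(0,0)$, $R=(1,0)$. The map $\tau\colon M\otimes\mathbb{S}\to\mathbb{S}$, $\tau(m\otimes x)=\sigma_m(x)$, is a bijection preserving distinguished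 points, and $\sigma=\tau^{-1}\colon\mathbb{S}\to M\otimes\mathbb{S}$. *)

(* Defs.v *)
From HB Require Import structures.
From mathcomp Require Import all_boot all_order all_algebra.
From mathcomp Require Import all_classical all_reals all_analysis.
From Stdlib Require Import Relations.
Set Implicit Arguments.
Unset Strict Implicit.
Unset Printing Implicit Defensive.
Import Order.TTheory GRing.Theory Num.Theory.
Import numFieldNormedType.Exports.
Local Open Scope ring_scope.
Local Open Scope classical_set_scope.

Definition is_tripointed_metric (R : realType) (X : Type) (d : X -> X -> R)
    (T L Rt : X) : Prop :=
  [/\ (forall x y, 0 <= d x y),
      (forall x y, d x y = 0 <-> x = y),
      (forall x y, d x y = d y x),
      (forall x y z, d x z <= d x y + d y z)
    & (forall x y, d x y <= 1)] /\
  [/\ T <> L, T <> Rt, L <> Rt & [/\ d T L = 1, d T Rt = 1 & d L Rt = 1]].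

Record Met3 (R : realType) := {
  m3car :> Type;
  m3dist : m3car -> m3car -> R;
  m3T : m3car;
  m3L : m3car;
  m3R : m3car;
  m3ax : is_tripointed_metric m3dist m3T m3L m3R }.

Definition met_continuous (R : realType) (X Y : Type) (dX : X -> X -> R)
    (dY : Y -> Y -> R) (f : X -> Y) : Prop :=
  forall x (e : R), 0 < e ->
    exists2 dl : R, 0 < dl & forall y, dX x y < dl -> dY (f x) (f y) < e.

Definition met3C_hom (R : realType) (X Y : Type) (dX : X -> X -> R)
    (TX LX RX : X) (dY : Y -> Y -> R) (TY LY RY : Y) (f : X -> Y) : Prop :=
  [/\ met_continuous dX dY f, f TX = TY, f LX = LY & f RX = RY].

Inductive Mlab := Ma | Mb | Mc.

Definition Mlab_eqb (m n : Mlab) : bool :=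
  match m, n with
  | Ma, Ma | Mb, Mb | Mc, Mc => true
  | _, _ => false
  end.

Section Tensor.
Variables (R : realType) (X : Type) (d : X -> X -> R) (T L Rt : X).

Definition dprod (p q : Mlab * X) : R :=
  if Mlab_eqb p.1 q.1 then d p.2 q.2 / 2 else 1.

Definition glue0 (p q : Mlab * X) : Prop :=
  [\/ p = (Mb, T) /\ q = (Ma, L),
      p = (Ma, Rt) /\ q = (Mc, T)
    | p = (Mc, L) /\ q = (Mb, Rt)].

Definition glue : Mlab * X -> Mlab * X -> Prop :=
  clos_refl_sym_trans (Mlab * X) glue0.

Definition Tens : Type := {C : Mlab * X -> Prop | exists p, C = glue p}.

Definition tens (m : Mlab) (x : X) : Tens :=
  exist (fun C => exists p, C = glue p) (glue (m, x)) (ex_intro _ (m, x) erefl).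

(** [chain p q r]: there is a chain p = p0, q0 ~ p1, q1 ~ p2, ..., q_n = q
    of total length r = sum_i dprod p_i q_i. *)
Inductive chain : Mlab * X -> Mlab * X -> R -> Prop :=
  | chain_one p q : chain p q (dprod p q)
  | chain_cons p q0 p1 q r : glue q0 p1 -> chain p1 q r ->
      chain p q (dprod p q0 + r).

Definition dtens (u v : Tens) : R :=
  inf [set r : R | exists p q, proj1_sig u p /\ proj1_sig v q /\ chain p q r].

Definition tensT : Tens := tens Ma T.
Definition tensL : Tens := tens Mb L.
Definition tensR : Tens := tens Mc Rt.

End Tensor.

(** F on morphisms, as a graph: (M (x) f)(m (x) x) = m (x) f(x). *)
Definition Fmap_graph (R : realType) (X Y : Type) (TX LX RX : X) (TY LY RY : Y)
    (f : X -> Y) (u : Tens TX LX RX) (v : Tens TY LY RY) : Prop :=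
  forall m x, u = tens TX LX RX m x -> v = tens TY LY RY m (f x).

Definition is_coalgebra (R : realType) (X : Type) (d : X -> X -> R) (T L Rt : X)
    (e : X -> Tens T L Rt) : Prop :=
  met3C_hom d T L Rt (@dtens R X d T L Rt) (tensT T L Rt) (tensL T L Rt) (tensR T L Rt) e.

Definition is_coalg_hom (R : realType) (X Y : Type)
    (dX : X -> X -> R) (TX LX RX : X) (alpha : X -> Tens TX LX RX)
    (dY : Y -> Y -> R) (TY LY RY : Y) (beta : Y -> Tens TY LY RY)
    (h : X -> Y) : Prop :=
  met3C_hom dX TX LX RX dY TY LY RY h /\
  forall x, @Fmap_graph R X Y TX LX RX TY LY RY h (alpha x) (beta (h x)).

Definition is_final_coalgebra (R : realType) (Z : Type) (dZ : Z -> Z -> R)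
    (TZ LZ RZ : Z) (beta : Z -> Tens TZ LZ RZ) : Prop :=
  forall (Y : Met3 R) (alpha : Y -> Tens (m3T Y) (m3L Y) (m3R Y)),
    @is_coalgebra R Y (@m3dist R Y) (m3T Y) (m3L Y) (m3R Y) alpha ->
    exists! h : Y -> Z,
      @is_coalg_hom R Y Z (@m3dist R Y) (m3T Y) (m3L Y) (m3R Y) alpha
        dZ TZ LZ RZ beta h.

Definition sig_map (R : realType) (m : Mlab) (p : R * R) : R * R :=
  match m with
  | Ma => (p.1 / 2 + 1 / 4, p.2 / 2 + Num.sqrt 3 / 4)
  | Mb => (p.1 / 2, p.2 / 2)
  | Mc => (p.1 / 2 + 1 / 2, p.2 / 2)
  end.

Definition euclid (R : realType) (p q : R * R) : R :=
  Num.sqrt ((p.1 - q.1) ^+ 2 + (p.2 - q.2) ^+ 2).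

(* Main.v *)
Require Import Defs.
From HB Require Import structures.
From mathcomp Require Import all_boot all_order all_algebra.
From mathcomp Require Import all_classical all_reals all_analysis.
From mathcomp Require Import ring lra.
From Stdlib Require Import Relations.
Import Order.TTheory GRing.Theory Num.Theory.
Import numFieldNormedType.Exports.
Set Implicit Arguments.
Unset Strict Implicit.
Unset Printing Implicit Defensive.
Local Open Scope ring_scope.
Local Open Scope classical_set_scope.


Definition inD (R : realType) (p : R * R) : Prop :=
  [/\ 0 <= p.2, p.2 <= Num.sqrt 3 * p.1 & p.2 <= Num.sqrt 3 - Num.sqrt 3 * p.1].

Definition Tp (R : realType) : R * R := (1 / 2, Num.sqrt 3 / 2).
Definition Lp (R : realType) : R * R := (0, 0).
Definition Rp (R : realType) : R * R := (1, 0).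

Definition corner (X : Type) (T L Rt : X) (m n : Mlab) : X :=
  match m, n with
  | Ma, Mb => L | Ma, Mc => Rt | Mb, Ma => T | Mb, Mc => Rt
  | Mc, Ma => T | Mc, Mb => L | _, _ => T end.

Lemma sqrt3_facts (R : realType) :
  Num.sqrt (3:R) ^+ 2 = 3 /\ 1 < Num.sqrt (3:R) /\ Num.sqrt (3:R) < 2.
Proof.
have h3 : Num.sqrt (3:R) ^+ 2 = 3 by rewrite sqr_sqrtr // ler0n.
have hp : 0 <= Num.sqrt (3:R) by apply: sqrtr_ge0.
split=> //; split; nra.
Qed.

Lemma sqrt_le_of (R : realType) (a b : R) : 0 <= b -> a <= b ^+ 2 -> Num.sqrt a <= b.
Proof.
move=> b0 ab; apply: le_trans (ler_wsqrtr ab) _.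
by rewrite sqrtr_sqr ger0_norm.
Qed.

Lemma le_sqrt_of (R : realType) (a b : R) : b ^+ 2 <= a -> b <= Num.sqrt a.
Proof.
move=> ab; apply: le_trans (ler_wsqrtr ab).
by rewrite sqrtr_sqr ler_norm.
Qed.

Lemma diam_aux (R : realType) (s X1 y1 X2 y2 : R) : s ^+ 2 = 3 -> 0 < s ->
  0 <= y1 -> y1 <= X1 -> y1 <= s - X1 ->
  0 <= y2 -> y2 <= X2 -> y2 <= s - X2 ->
  (X1 - X2) ^+ 2 + 3 * (y1 - y2) ^+ 2 <= 3.
Proof.
move=> hs s0 a1 a2 a3 b1 b2 b3.
have p1 : 0 <= y1 * (X1 - y1) by apply: mulr_ge0; lra.
have p2 : 0 <= y1 * (s - X1 - y1) by apply: mulr_ge0; lra.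
have p3 : 0 <= (X1 - y1) * (s - X1 - y1) by apply: mulr_ge0; lra.
have q1 : 0 <= y2 * (X2 - y2) by apply: mulr_ge0; lra.
have q2 : 0 <= y2 * (s - X2 - y2) by apply: mulr_ge0; lra.
have q3 : 0 <= (X2 - y2) * (s - X2 - y2) by apply: mulr_ge0; lra.
have r1 : 0 <= y1 * y2 by apply: mulr_ge0; lra.
have r2 : 0 <= (X1 - y1) * (X2 - y2) by apply: mulr_ge0; lra.
have r3 : 0 <= (s - X1 - y1) * (s - X2 - y2) by apply: mulr_ge0; lra.
nra.
Qed.

Lemma diam_D (R : realType) (p q : R * R) : inD p -> inD q ->
  (p.1 - q.1) ^+ 2 + (p.2 - q.2) ^+ 2 <= 1.
Proof.
case: p => x1 y1; case: q => x2 y2 [h1 h2 h3] [h4 h5 h6]; simpl in *.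
have [s2 [s1 s3]] := sqrt3_facts R.
set s := Num.sqrt 3 in s2 s1 s3 h1 h2 h3 h4 h5 h6 *.
have := @diam_aux R s (s * x1) y1 (s * x2) y2 s2 ltac:(lra) h1 h2 h3 h4 h5 h6.
have -> : (s * x1 - s * x2) ^+ 2 = 3 * (x1 - x2) ^+ 2.
  by rewrite -mulrBr exprMn s2.
lra.
Qed.

Lemma inD_sig (R : realType) m (p : R * R) : inD p -> inD (sig_map m p).
Proof.
case: p => x y [h1 h2 h3]; have [s2 [s1 s3]] := sqrt3_facts R.
case: m; rewrite /inD /=; set s := Num.sqrt 3 in s2 s1 s3 h1 h2 h3 *; simpl in *.
split. lra. rewrite mulrDr. lra. rewrite mulrDr. lra.
split. lra. lra. lra.
split. lra. rewrite mulrDr. lra. rewrite mulrDr. lra.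
Qed.

Lemma inD_T (R : realType) : inD (@Tp R).
Proof. have [s2 [s1 s3]] := sqrt3_facts R; rewrite /inD /Tp /=; split; nra. Qed.
Lemma inD_L (R : realType) : inD (@Lp R).
Proof. have [s2 [s1 s3]] := sqrt3_facts R; rewrite /inD /Lp /=; split; nra. Qed.
Lemma inD_R (R : realType) : inD (@Rp R).
Proof. have [s2 [s1 s3]] := sqrt3_facts R; rewrite /inD /Rp /=; split; nra. Qed.

Lemma euclid_ge0 (R : realType) (p q : R * R) : 0 <= euclid p q.
Proof. exact: sqrtr_ge0. Qed.

Lemma euclid_sym (R : realType) (p q : R * R) : euclid p q = euclid q p.
Proof. by rewrite /euclid -!(sqrrN (p.1 - _)) -!(sqrrN (p.2 - _)) !opprB. Qed.

Lemma euclid_eq0 (R : realType) (p q : R * R) : euclid p q = 0 <-> p = q.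
Proof.
split; last by move=> ->; rewrite /euclid !subrr expr0n /= addr0 sqrtr0.
case: p => x1 y1; case: q => x2 y2; rewrite /euclid /= => /eqP.
rewrite sqrtr_eq0 => h.
have a : (x1 - x2) ^+ 2 = 0 by apply/eqP; rewrite eq_le sqr_ge0 andbT;
  have := sqr_ge0 (x1 - x2); have := sqr_ge0 (y1 - y2); lra.
have b : (y1 - y2) ^+ 2 = 0 by apply/eqP; rewrite eq_le sqr_ge0 andbT;
  have := sqr_ge0 (x1 - x2); have := sqr_ge0 (y1 - y2); lra.
move/eqP: a; rewrite sqrf_eq0 subr_eq0 => /eqP ->.
by move/eqP: b; rewrite sqrf_eq0 subr_eq0 => /eqP ->.
Qed.

Lemma euclid_tri (R : realType) (p q r : R * R) :
  euclid p r <= euclid p q + euclid q r.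
Proof.
rewrite /euclid.
set a := p.1 - q.1; set b := p.2 - q.2; set c := q.1 - r.1; set d := q.2 - r.2.
have -> : p.1 - r.1 = a + c by rewrite /a /c; ring.
have -> : p.2 - r.2 = b + d by rewrite /b /d; ring.
set A := Num.sqrt (a ^+ 2 + b ^+ 2); set C := Num.sqrt (c ^+ 2 + d ^+ 2).
have A0 : 0 <= A by apply: sqrtr_ge0.
have C0 : 0 <= C by apply: sqrtr_ge0.
have A2 : A ^+ 2 = a ^+ 2 + b ^+ 2 by rewrite sqr_sqrtr // addr_ge0 // sqr_ge0.
have C2 : C ^+ 2 = c ^+ 2 + d ^+ 2 by rewrite sqr_sqrtr // addr_ge0 // sqr_ge0.
have key : a * c + b * d <= A * C.
  have [hn|hp] := lerP (a * c + b * d) 0; first by nra.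
  have : (a * c + b * d) ^+ 2 <= (A * C) ^+ 2.
    rewrite exprMn A2 C2; have := sqr_ge0 (a * d - b * c); nra.
  move=> h; rewrite -[A * C]ger0_norm ?mulr_ge0 // -[a * c + b * d]gtr0_norm //.
  by rewrite -ler_sqr ?nnegrE ?normr_ge0 // !real_normK ?num_real.
apply: sqrt_le_of; first by lra.
nra.
Qed.

Lemma euclid_sig (R : realType) m (p q : R * R) :
  euclid (sig_map m p) (sig_map m q) = euclid p q / 2.
Proof.
have e : forall a b : R, Num.sqrt (a ^+ 2 + b ^+ 2) / 2 =
   Num.sqrt ((a / 2) ^+ 2 + (b / 2) ^+ 2).
  move=> a b; have -> : (a / 2) ^+ 2 + (b / 2) ^+ 2 = (1/2) ^+ 2 * (a ^+ 2 + b ^+ 2) by ring.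
  rewrite sqrtrM ?sqr_ge0 // sqrtr_sqr ger0_norm; last by lra.
  by rewrite mulrC mul1r.
rewrite /euclid e; case: m => /=; congr (Num.sqrt (_ ^+ 2 + _ ^+ 2)); ring.
Qed.

Lemma euclid_le1 (R : realType) (p q : R * R) : inD p -> inD q -> euclid p q <= 1.
Proof. by move=> hp hq; apply: sqrt_le_of => //; rewrite expr1n; apply: diam_D. Qed.

Lemma euclid_coord1 (R : realType) (p q : R * R) : `|p.1 - q.1| <= euclid p q.
Proof. by apply: le_sqrt_of; rewrite real_normK ?num_real //; have := sqr_ge0 (p.2 - q.2); lra. Qed.
Lemma euclid_coord2 (R : realType) (p q : R * R) : `|p.2 - q.2| <= euclid p q.
Proof. by apply: le_sqrt_of; rewrite real_normK ?num_real //; have := sqr_ge0 (p.1 - q.1); lra. Qed.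

Lemma euclid_le_coord (R : realType) (p q : R * R) :
  euclid p q <= `|p.1 - q.1| + `|p.2 - q.2|.
Proof.
apply: sqrt_le_of; first by rewrite addr_ge0.
have h1 := normr_ge0 (p.1 - q.1); have h2 := normr_ge0 (p.2 - q.2).
rewrite -(real_normK (num_real (p.1 - q.1))) -(real_normK (num_real (p.2 - q.2))).
nra.
Qed.


Lemma sqrt_half (R : realType) (a b : R) : Num.sqrt (a ^+ 2 + b ^+ 2) / 2 =
   Num.sqrt ((a / 2) ^+ 2 + (b / 2) ^+ 2).
Proof.
have -> : (a / 2) ^+ 2 + (b / 2) ^+ 2 = (1/2) ^+ 2 * (a ^+ 2 + b ^+ 2) by ring.
rewrite sqrtrM ?sqr_ge0 // sqrtr_sqr ger0_norm; last by lra.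
by rewrite mulrC mul1r.
Qed.

Lemma sig_diff1 (R : realType) m (p q : R * R) :
  (sig_map m p).1 - (sig_map m q).1 = (p.1 - q.1) / 2.
Proof. by case: m => /=; ring. Qed.
Lemma sig_diff2 (R : realType) m (p q : R * R) :
  (sig_map m p).2 - (sig_map m q).2 = (p.2 - q.2) / 2.
Proof. by case: m => /=; ring. Qed.

Lemma sig_inj (R : realType) m m' (p p' : R * R) : inD p -> inD p' ->
  sig_map m p = sig_map m' p' ->
  (m = m' /\ p = p') \/
  (m <> m' /\ p = corner (@Tp R) (@Lp R) (@Rp R) m m' /\ p' = corner (@Tp R) (@Lp R) (@Rp R) m' m).
Proof.
case: p => x y; case: p' => x' y' [h1 h2 h3] [h4 h5 h6]; simpl in *.
have [s2 [s1 s3]] := sqrt3_facts R.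
case: m; case: m'; move=> /= [e1 e2];
  set s := Num.sqrt 3 in s2 s1 s3 h1 h2 h3 h4 h5 h6 e1 e2 *;
  try (left; split => //; congr pair; lra);
  right; (split; first by []); rewrite /Tp /Lp /Rp /=; try rewrite -/s.
- have ex' : x' = x + 1/2 by lra.
  have ey' : y' = y + s / 2 by lra.
  rewrite ex' ey' ?mulrDr ?mulrBr ?mulr1 in h4 h5 h6 *.
  have hx : s * x = s * (0) by rewrite ?mulr0 ?mulr1; lra.
  have hx' : x = 0.
    have sn0 : s != 0 by apply/eqP => s0; rewrite s0 in s1; lra.
    exact: (mulfI sn0 hx).
  rewrite hx' in h2 h3 h5 h6 hx *.
  split; congr pair; rewrite ?mulr0 ?mulr1 in h2 h3 h5 h6 hx *; lra.
- have ex' : x' = x - 1/2 by lra.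
  have ey' : y' = y + s / 2 by lra.
  rewrite ex' ey' ?mulrDr ?mulrBr ?mulr1 in h4 h5 h6 *.
  have hx : s * x = s * (1) by rewrite ?mulr0 ?mulr1; lra.
  have hx' : x = 1.
    have sn0 : s != 0 by apply/eqP => s0; rewrite s0 in s1; lra.
    exact: (mulfI sn0 hx).
  rewrite hx' in h2 h3 h5 h6 hx *.
  split; congr pair; rewrite ?mulr0 ?mulr1 in h2 h3 h5 h6 hx *; lra.
- have ex' : x' = x - 1/2 by lra.
  have ey' : y' = y - s / 2 by lra.
  rewrite ex' ey' ?mulrDr ?mulrBr ?mulr1 in h4 h5 h6 *.
  have hx : s * x = s * (1/2) by rewrite ?mulr0 ?mulr1; lra.
  have hx' : x = 1/2.
    have sn0 : s != 0 by apply/eqP => s0; rewrite s0 in s1; lra.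
    exact: (mulfI sn0 hx).
  rewrite hx' in h2 h3 h5 h6 hx *.
  split; congr pair; rewrite ?mulr0 ?mulr1 in h2 h3 h5 h6 hx *; lra.
- have ex' : x' = x - 1 by lra.
  have ey' : y' = y by lra.
  rewrite ex' ey' ?mulrDr ?mulrBr ?mulr1 in h4 h5 h6 *.
  have hx : s * x = s * (1) by rewrite ?mulr0 ?mulr1; lra.
  have hx' : x = 1.
    have sn0 : s != 0 by apply/eqP => s0; rewrite s0 in s1; lra.
    exact: (mulfI sn0 hx).
  rewrite hx' in h2 h3 h5 h6 hx *.
  split; congr pair; rewrite ?mulr0 ?mulr1 in h2 h3 h5 h6 hx *; lra.
- have ex' : x' = x + 1/2 by lra.
  have ey' : y' = y - s / 2 by lra.
  rewrite ex' ey' ?mulrDr ?mulrBr ?mulr1 in h4 h5 h6 *.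
  have hx : s * x = s * (1/2) by rewrite ?mulr0 ?mulr1; lra.
  have hx' : x = 1/2.
    have sn0 : s != 0 by apply/eqP => s0; rewrite s0 in s1; lra.
    exact: (mulfI sn0 hx).
  rewrite hx' in h2 h3 h5 h6 hx *.
  split; congr pair; rewrite ?mulr0 ?mulr1 in h2 h3 h5 h6 hx *; lra.
- have ex' : x' = x + 1 by lra.
  have ey' : y' = y by lra.
  rewrite ex' ey' ?mulrDr ?mulrBr ?mulr1 in h4 h5 h6 *.
  have hx : s * x = s * (0) by rewrite ?mulr0 ?mulr1; lra.
  have hx' : x = 0.
    have sn0 : s != 0 by apply/eqP => s0; rewrite s0 in s1; lra.
    exact: (mulfI sn0 hx).
  rewrite hx' in h2 h3 h5 h6 hx *.
  split; congr pair; rewrite ?mulr0 ?mulr1 in h2 h3 h5 h6 hx *; lra.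
Qed.


Lemma corner_glue_pt (R : realType) m m' : m <> m' ->
  sig_map m (corner (@Tp R) (@Lp R) (@Rp R) m m') =
  sig_map m' (corner (@Tp R) (@Lp R) (@Rp R) m' m).
Proof. by case: m; case: m' => // _; rewrite /Tp /Lp /Rp /=; congr pair; lra. Qed.

Definition ndir (R : realType) (m n : Mlab) : R * R :=
  match m, n with
  | Ma, Mb => (1/2, Num.sqrt 3 / 2) | Mb, Ma => (-(1/2), -(Num.sqrt 3 / 2))
  | Ma, Mc => (-(1/2), Num.sqrt 3 / 2) | Mc, Ma => (1/2, -(Num.sqrt 3 / 2))
  | Mb, Mc => (-1, 0) | Mc, Mb => (1, 0)
  | _, _ => (0, 0) end.

Lemma ndir_unit (R : realType) m m' : m <> m' ->
  (ndir R m m').1 ^+ 2 + (ndir R m m').2 ^+ 2 = 1.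
Proof.
have [s2 [s1 s3]] := sqrt3_facts R.
by case: m; case: m' => // _ /=; nra.
Qed.

Lemma ndir_opp (R : realType) m m' :
  ndir R m' m = (- (ndir R m m').1, - (ndir R m m').2).
Proof. by case: m; case: m' => /=; rewrite ?opprK ?oppr0. Qed.

Lemma cone (R : realType) m m' (p : R * R) : m <> m' -> inD p ->
  let c := corner (@Tp R) (@Lp R) (@Rp R) m m' in
  let n := ndir R m m' in
  euclid p c <= 2 * (n.1 * (p.1 - c.1) + n.2 * (p.2 - c.2)).
Proof.
case: p => x y hmm [h1 h2 h3]; simpl in *.
have [s2 [s1 s3]] := sqrt3_facts R.
rewrite /euclid.
case: m hmm; case: m' => // _; rewrite /Tp /Lp /Rp /=.
all: set s := Num.sqrt 3 in s2 s1 s3 h1 h2 h3 *.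
all: have p1 : 0 <= y * (s * x - y) by apply: mulr_ge0; lra.
all: have p2 : 0 <= y * (s - s * x - y) by apply: mulr_ge0; lra.
all: have p3 : 0 <= (s * x - y) * (s - s * x - y) by apply: mulr_ge0; lra.
all: apply: sqrt_le_of; nra.
Qed.

Lemma cone_combine (R : realType) (u1 u2 v1 v2 n1 n2 : R) : n1 ^+ 2 + n2 ^+ 2 = 1 ->
  Num.sqrt (u1 ^+ 2 + u2 ^+ 2) <= 2 * (n1 * u1 + n2 * u2) ->
  Num.sqrt (v1 ^+ 2 + v2 ^+ 2) <= - (2 * (n1 * v1 + n2 * v2)) ->
  Num.sqrt (u1 ^+ 2 + u2 ^+ 2) + Num.sqrt (v1 ^+ 2 + v2 ^+ 2) <=
  2 * Num.sqrt ((u1 - v1) ^+ 2 + (u2 - v2) ^+ 2).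
Proof.
move=> hn hu hv.
have hw : n1 * (u1 - v1) + n2 * (u2 - v2) <= Num.sqrt ((u1 - v1) ^+ 2 + (u2 - v2) ^+ 2).
  have [hn0|hp0] := lerP (n1 * (u1 - v1) + n2 * (u2 - v2)) 0.
    by apply: le_trans hn0 (sqrtr_ge0 _).
  apply: le_sqrt_of.
  have := sqr_ge0 (n1 * (u2 - v2) - n2 * (u1 - v1)).
  have e : (n1 * (u1 - v1) + n2 * (u2 - v2)) ^+ 2 + (n1 * (u2 - v2) - n2 * (u1 - v1)) ^+ 2
     = (n1 ^+ 2 + n2 ^+ 2) * ((u1 - v1) ^+ 2 + (u2 - v2) ^+ 2) by ring.
  rewrite hn mul1r in e; lra.
have e2 : n1 * (u1 - v1) + n2 * (u2 - v2) = (n1 * u1 + n2 * u2) - (n1 * v1 + n2 * v2) by ring.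
lra.
Qed.

Lemma sigma_geo (R : realType) m m' (p p' : R * R) : m <> m' -> inD p -> inD p' ->
  euclid p (corner (@Tp R) (@Lp R) (@Rp R) m m') / 2 +
  euclid (corner (@Tp R) (@Lp R) (@Rp R) m' m) p' / 2 <=
  2 * euclid (sig_map m p) (sig_map m' p').
Proof.
move=> hmm hp hp'.
have c1 := cone hmm hp.
have hmm' : m' <> m by move=> e; apply: hmm.
have c2 := cone hmm' hp'.
have hu := ndir_unit R hmm.
move: c1 c2; rewrite (ndir_opp R m m') /=.
set c := corner _ _ _ m m'; set c' := corner _ _ _ m' m.
set n1 := (ndir R m m').1; set n2 := (ndir R m m').2.
have G := corner_glue_pt R hmm; rewrite -/c -/c' in G.
have E1 : (sig_map m p).1 - (sig_map m' p').1 = (p.1 - c.1)/2 - (p'.1 - c'.1)/2.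
  by rewrite -(sig_diff1 m p c) -(sig_diff1 m' p' c') G; ring.
have E2 : (sig_map m p).2 - (sig_map m' p').2 = (p.2 - c.2)/2 - (p'.2 - c'.2)/2.
  by rewrite -(sig_diff2 m p c) -(sig_diff2 m' p' c') G; ring.
rewrite (euclid_sym c' p') /euclid E1 E2 !sqrt_half => c1 c2.
apply: (cone_combine (n1 := n1) (n2 := n2)) => //.
- rewrite -sqrt_half; lra.
- rewrite -sqrt_half; lra.
Qed.


Lemma Mlab_eqbP m n : reflect (m = n) (Mlab_eqb m n).
Proof. by case: m; case: n; constructor. Qed.

Definition gp (X : Type) (T L Rt : X) (p q : Mlab * X) : Prop :=
  (p = (Mb, T) /\ q = (Ma, L)) \/ (p = (Ma, Rt) /\ q = (Mc, T)) \/
  (p = (Mc, L) /\ q = (Mb, Rt)).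

Lemma glue0_gp (X : Type) (T L Rt : X) (p q : Mlab * X) : glue0 T L Rt p q <-> gp T L Rt p q.
Proof.
rewrite /glue0 /gp; split.
- by case => [h|h|h]; tauto.
- by case => [h|[h|h]]; [apply: Or31 | apply: Or32 | apply: Or33].
Qed.

Definition gl3 (X : Type) (T L Rt : X) (p q : Mlab * X) : Prop :=
  p = q \/ gp T L Rt p q \/ gp T L Rt q p.

Lemma glue_char (X : Type) (T L Rt : X) (p q : Mlab * X) : ~ (T = L) -> ~ (T = Rt) -> ~ (L = Rt) ->
  Defs.glue T L Rt p q <-> gl3 T L Rt p q.
Proof.
move=> hTL hTR hLR; split.
- elim => [x y H | x | x y _ IH | x y z _ IH1 _ IH2].
  + by right; left; apply/glue0_gp.
  + by left.
  + by move: IH; rewrite /gl3; intuition.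
  + move: IH1 IH2; rewrite /gl3 /gp.
    intuition (subst; try congruence; eauto).
- rewrite /gl3 => -[-> | [H | H]].
  + exact: rst_refl.
  + by apply: rst_step; apply/glue0_gp.
  + by apply: rst_sym; apply: rst_step; apply/glue0_gp.
Qed.

Lemma glue_refl (X : Type) (T L Rt : X) p : Defs.glue T L Rt p p.
Proof. exact: rst_refl. Qed.
Lemma glue_sym (X : Type) (T L Rt : X) p q : Defs.glue T L Rt p q -> Defs.glue T L Rt q p.
Proof. exact: rst_sym. Qed.
Lemma glue_trans (X : Type) (T L Rt : X) p q r :
  Defs.glue T L Rt p q -> Defs.glue T L Rt q r -> Defs.glue T L Rt p r.
Proof. exact: rst_trans. Qed.

Lemma tens_eq (X : Type) (T L Rt : X) m x m' x' :
  tens T L Rt m x = tens T L Rt m' x' <-> Defs.glue T L Rt (m, x) (m', x').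
Proof.
split.
- move=> /(congr1 (@proj1_sig _ _)) /= ->; exact: glue_refl.
- move=> g; apply: eq_exist; apply: funext => q; apply: propext; split.
  + by move=> h; apply: glue_trans (glue_sym g) h.
  + by move=> h; apply: glue_trans g h.
Qed.

Lemma tens_surj (X : Type) (T L Rt : X) (u : Tens T L Rt) :
  exists m x, u = tens T L Rt m x.
Proof.
case: u => C [[m x] e]; subst C; exists m, x.
by apply: eq_exist.
Qed.

Lemma dprod_ge0 (R : realType) (X : Type) (d : X -> X -> R) p q :
  (forall x y, 0 <= d x y) -> 0 <= dprod d p q.
Proof. move=> h; rewrite /dprod; case: Mlab_eqb => //; have := h p.2 q.2; lra. Qed.

Lemma dprod_same (R : realType) (X : Type) (d : X -> X -> R) m x y :
  dprod d (m, x) (m, y) = d x y / 2.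
Proof. by rewrite /dprod /=; case: m. Qed.

Lemma dprod_diff (R : realType) (X : Type) (d : X -> X -> R) m x m' y :
  m <> m' -> dprod d (m, x) (m', y) = 1.
Proof. by rewrite /dprod /=; case: Mlab_eqbP. Qed.

Lemma chain_ge0 (R : realType) (X : Type) (d : X -> X -> R) (T L Rt : X) p q r :
  (forall x y, 0 <= d x y) -> chain d T L Rt p q r -> 0 <= r.
Proof.
move=> h; elim => [p0 q0 | p0 q0 p1 q1 r0 _ _ IH]; first exact: dprod_ge0.
by apply: addr_ge0 => //; apply: dprod_ge0.
Qed.

Lemma chain_glue_l (R : realType) (X : Type) (d : X -> X -> R) (T L Rt : X) p0 p q r :
  (forall x, d x x = 0) -> Defs.glue T L Rt p0 p -> chain d T L Rt p q r ->
  chain d T L Rt p0 q r.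
Proof.
move=> h0 g c.
have := @chain_cons R X d T L Rt p0 p0 p q r g c.
by case: p0 {g} => m x; rewrite dprod_same h0 mul0r add0r.
Qed.

Lemma chain_glue_r (R : realType) (X : Type) (d : X -> X -> R) (T L Rt : X) p q q' r :
  (forall x, d x x = 0) -> chain d T L Rt p q r -> Defs.glue T L Rt q q' ->
  chain d T L Rt p q' r.
Proof.
move=> h0; elim => [p0 q0 | p0 q0 p1 q1 r0 g _ IH] g'.
- have := @chain_cons R X d T L Rt p0 q0 q' q' _ g' (chain_one d T L Rt q' q').
  by case: q' {g'} => m x; rewrite dprod_same h0 mul0r addr0.
- exact: chain_cons g (IH g').
Qed.


Lemma dtens_le (R : realType) (X : Type) (d : X -> X -> R) (T L Rt : X) m x m' x' r :
  (forall x y, 0 <= d x y) ->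
  chain d T L Rt (m, x) (m', x') r -> dtens d (tens T L Rt m x) (tens T L Rt m' x') <= r.
Proof.
move=> d0 c; apply: ge_inf.
- exists 0 => r' [p [q [_ [_ c']]]]; exact: chain_ge0 d0 c'.
- exists (m, x), (m', x'); split; first exact: glue_refl.
  split; first exact: glue_refl.
  exact: c.
Qed.

Lemma dtens_ge0 (R : realType) (X : Type) (d : X -> X -> R) (T L Rt : X) (u v : Tens T L Rt) :
  (forall x y, 0 <= d x y) -> 0 <= dtens d u v.
Proof.
move=> d0; have [m [x ->]] := tens_surj u; have [m' [x' ->]] := tens_surj v.
apply: lb_le_inf.
- exists (dprod d (m, x) (m', x')), (m, x), (m', x'); split; first exact: glue_refl.
  split; first exact: glue_refl.
  exact: chain_one.
- move=> r' [p [q [_ [_ c']]]]; exact: chain_ge0 d0 c'.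
Qed.

Lemma dtens_lt (R : realType) (X : Type) (d : X -> X -> R) (T L Rt : X) m x m' x' e :
  (forall x, d x x = 0) ->
  dtens d (tens T L Rt m x) (tens T L Rt m' x') < e ->
  exists r, chain d T L Rt (m, x) (m', x') r /\ r < e.
Proof.
move=> h0; rewrite /dtens; set E := (X in inf X) => hlt.
have ne : E !=set0.
  exists (dprod d (m, x) (m', x')), (m, x), (m', x'); split; first exact: glue_refl.
  split; first exact: glue_refl.
  exact: chain_one.
have [r [p [q [g1 [g2 c]]]] hr] := inf_lt ne hlt.
exists r; split => //.
apply: (chain_glue_l h0 g1).
apply: (chain_glue_r h0 c).
exact: glue_sym g2.
Qed.

Definition cbound (R : realType) (X : Type) (d : X -> X -> R) (T L Rt : X)
    (p q : Mlab * X) : R :=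
  if Mlab_eqb p.1 q.1 then d p.2 q.2 / 2
  else d p.2 (corner T L Rt p.1 q.1) / 2 + d (corner T L Rt q.1 p.1) q.2 / 2.

Lemma gp_corner (X : Type) (T L Rt : X) q0 p1 :
  gp T L Rt q0 p1 \/ gp T L Rt p1 q0 ->
  q0.1 <> p1.1 /\ q0.2 = corner T L Rt q0.1 p1.1 /\ p1.2 = corner T L Rt p1.1 q0.1.
Proof.
rewrite /gp => H.
by intuition (subst; simpl; repeat split; discriminate).
Qed.

Lemma corner_dist (R : realType) (X : Type) (d : X -> X -> R) (T L Rt : X) m1 m m' :
  is_tripointed_metric d T L Rt ->
  m1 <> m -> m1 <> m' -> m <> m' -> d (corner T L Rt m1 m) (corner T L Rt m1 m') = 1.
Proof.
case=> [[d0 deq dsym dtri d1] [nTL nTR nLR [dTL dTR dLR]]].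
case: m1; case: m; case: m' => //= *;
  first [ exact: dTL | exact: dTR | exact: dLR
        | rewrite dsym; exact: dTL | rewrite dsym; exact: dTR | rewrite dsym; exact: dLR].
Qed.

Lemma chain_lb (R : realType) (X : Type) (d : X -> X -> R) (T L Rt : X) p q r :
  is_tripointed_metric d T L Rt ->
  chain d T L Rt p q r -> r < 1/2 -> cbound d T L Rt p q <= r.
Proof.
move=> H; have := H.
case=> [[d0 deq dsym dtri d1] [nTL nTR nLR [dTL dTR dLR]]].
have dxx : forall x, d x x = 0 by move=> x; apply/deq.
elim => [[m x] [m' z] | [m x] [m0 y] p1 [m' z] r0 g c IH] hr.
- move: hr; rewrite /cbound /dprod /=; case: Mlab_eqbP => _ hr; lra.
- have r0ge := chain_ge0 d0 c.
  have hdp := dprod_ge0 (m, x) (m0, y) d0.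
  have hr' : r0 < 1/2 by lra.
  have {}IH := IH hr'.
  case: (Mlab_eqbP m m0) => [e|ne]; last by rewrite dprod_diff // in hr; lra.
  subst m0; rewrite dprod_same in hr *.
  move/(glue_char _ _ nTL nTR nLR): g => [e | gg].
  + subst p1.
    move: IH; rewrite /cbound /=; case: Mlab_eqbP => _ IH.
    * have := dtri x y z; lra.
    * have := dtri x y (corner T L Rt m m'); lra.
  + have [hne [ey ep1]] := gp_corner gg; simpl in *.
    case: p1 ep1 ey hne IH c gg => m1 y1 /= -> ey hne IH c gg.
    subst y.
    move: IH; rewrite /cbound /=.
    case: (Mlab_eqbP m1 m') => [e1|n1].
    * subst m'; case: (Mlab_eqbP m m1) => [e2|_] IH; first by [].
      have := d0 x (corner T L Rt m m1); lra.
    * case: (Mlab_eqbP m m') => [e2|n2] IH.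
      - subst m'; rewrite dxx in IH.
        have := dtri x (corner T L Rt m m1) z; lra.
      - have hne' : m1 <> m by move=> e; apply: hne.
        have := corner_dist H hne' n1 n2.
        have := d0 (corner T L Rt m' m1) z; lra.
Qed.


Lemma S_bounded (R : realType) (S : set (R * R)) : compact S ->
  exists M : R, 0 <= M /\ forall q, S q -> `|q.1| <= M /\ `|q.2| <= M.
Proof.
move=> cS; have := compact_bounded cS.
case=> M [Mr hM].
have := hM (`|M| + 1); rewrite /= => /(_ _) h.
have hlt : M < `|M| + 1.
  by apply: le_lt_trans (real_ler_norm Mr) _; rewrite ltrDl.
exists (`|M| + 1); split; first by rewrite addr_ge0.
move=> q Sq; have := h hlt q Sq; rewrite prod_normE /= ge_max => /andP[].
by [].
Qed.

Lemma S_closed (R : realType) (S : set (R * R)) : compact S ->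
  forall p, (forall e : R, 0 < e -> exists q, S q /\ `|p.1 - q.1| < e /\ `|p.2 - q.2| < e) -> S p.
Proof.
move=> cS p H.
have cl := compact_closed (@norm_hausdorff _ _) cS.
apply: cl => B /nbhs_ballP [e e0 hB].
have [q [Sq [h1 h2]]] := H e e0.
exists q; split => //; apply: hB.
by split.
Qed.

Lemma pow2_gt (R : realType) (n : nat) : (n%:R : R) < 2 ^+ n.
Proof.
have h : (n < 2 ^ n)%N by apply: ltn_expl.
by rewrite -natrX ltr_nat.
Qed.

Lemma pow2_gt0 (R : realType) (n : nat) : (0 : R) < 2 ^+ n.
Proof. by apply: exprn_gt0. Qed.

Lemma small_zero (R : realType) (x K : R) : (forall n, x <= K / 2 ^+ n) -> x <= 0.
Proof.
move=> h; rewrite leNgt; apply/negP => x0.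
have [K0|K0] := lerP K 0.
  have := h 0%N; rewrite expr0 divr1; lra.
have kx0 : 0 <= K / x by apply: divr_ge0; lra.
have hb := archi_boundP kx0.
set n := Num.bound (K / x) in hb.
have h2 := pow2_gt R n.
have hn := h n.
have p2 := pow2_gt0 R n.
have : K / x < 2 ^+ n by lra.
rewrite ltr_pdivrMr // => hK.
move: hn; rewrite ler_pdivlMr // => hn.
lra.
Qed.

Lemma lim_seq (R : realType) (u : nat -> R) (C : R) :
  (forall n k, `|u (n + k)%N - u n| <= C / 2 ^+ n) ->
  exists l, forall n, `|l - u n| <= C / 2 ^+ n.
Proof.
move=> h.
have C0 : 0 <= C by have := h 0%N 0%N; rewrite addn0 subrr normr0 expr0 divr1.
have key : forall k n, u k - C / 2 ^+ k <= u n + C / 2 ^+ n.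
  move=> k n; have [kn|nk] := leqP k n.
  - have := h k (n - k)%N; rewrite subnKC // ler_distl => /andP[a b].
    have : 0 <= C / 2 ^+ n by apply: divr_ge0 => //; apply: ltW; apply: pow2_gt0.
    move: a b; set w1 := C / 2 ^+ n; set w2 := C / 2 ^+ k; move=> a b c; lra.
  - have := h n (k - n)%N; rewrite subnKC; last exact: ltnW.
    rewrite ler_distl => /andP[a b].
    have : 0 <= C / 2 ^+ k by apply: divr_ge0 => //; apply: ltW; apply: pow2_gt0.
    move: a b; set w1 := C / 2 ^+ n; set w2 := C / 2 ^+ k; move=> a b c; lra.
set E := [set y | exists n, y = u n - C / 2 ^+ n].
have neE : E !=set0 by exists (u 0%N - C / 2 ^+ 0); exists 0%N.
have ubE : forall n, ubound E (u n + C / 2 ^+ n).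
  by move=> n y [k ->]; apply: key.
have hs : has_sup E by split => //; exists (u 0%N + C / 2 ^+ 0); apply: ubE.
exists (sup E) => n; rewrite ler_distl; apply/andP; split.
- by apply: sup_upper_bound => //; exists n.
- by apply: ge_sup => //; apply: ubE.
Qed.


Lemma half_pow (R : realType) (K : R) n : K / 2 ^+ n.+1 = (K / 2 ^+ n) / 2.
Proof. by rewrite exprSr invfM mulrA. Qed.

Lemma S_in_D (R : realType) (S : set (R * R)) : compact S ->
  S = sig_map Ma @` S `|` sig_map Mb @` S `|` sig_map Mc @` S ->
  forall p, S p -> inD p.
Proof.
move=> cS S_fix.
have [M [M0 hM]] := S_bounded cS.
have [s2 [s1 s3]] := sqrt3_facts R.
set s := Num.sqrt 3 in s2 s1 s3 *.
have claim : forall n p, S p ->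
  [/\ - (3 * M / 2 ^+ n) <= p.2, - (3 * M / 2 ^+ n) <= s * p.1 - p.2 &
      - (3 * M / 2 ^+ n) <= s - s * p.1 - p.2].
  elim => [|n IH] p Sp.
  - rewrite expr0 divr1.
    have [h1 h2] := hM p Sp.
    move: h1 h2; rewrite !ler_norml => /andP[a b] /andP[c d].
    have e1 : 0 <= s * (p.1 + M) by apply: mulr_ge0; lra.
    have e2 : 0 <= s * (M - p.1) by apply: mulr_ge0; lra.
    have e3 : 0 <= (2 - s) * M by apply: mulr_ge0; lra.
    split; lra.
  - move: Sp; rewrite S_fix => -[[Sp|Sp]|Sp]; case: Sp => q Sq <-;
    have [a b c] := IH q Sq; rewrite half_pow;
    move: a b c; set w := 3 * M / 2 ^+ n; move=> a b c;
    rewrite /=; try rewrite -/s; rewrite ?mulrDr; split; lra.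
move=> p Sp; split.
- rewrite -oppr_le0; apply: (@small_zero _ _ (3 * M)) => n.
  have [a _ _] := claim n p Sp; lra.
- rewrite -/s -subr_ge0 -oppr_le0; apply: (@small_zero _ _ (3 * M)) => n.
  have [_ a _] := claim n p Sp; lra.
- rewrite -/s -subr_ge0 -oppr_le0; apply: (@small_zero _ _ (3 * M)) => n.
  have [_ _ a] := claim n p Sp; lra.
Qed.


Lemma exists_pow (R : realType) (e : R) : 0 < e -> exists n : nat, 1 / 2 ^+ n < e.
Proof.
move=> e0; apply/not_existsP => /= H.
have : e <= 0.
  apply: (@small_zero _ _ 1) => n.
  by rewrite leNgt; apply/negP; exact: H n.
lra.
Qed.

Lemma eq_of_small (R : realType) (a b K : R) :
  (forall n, `|a - b| <= K / 2 ^+ n) -> a = b.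
Proof.
move=> h; have := small_zero h => h0.
have : `|a - b| = 0 by apply/eqP; rewrite eq_le h0 normr_ge0.
by move/eqP; rewrite normr_eq0 subr_eq0 => /eqP.
Qed.

Lemma sval_inj (R : realType) (S : set (R * R)) (p q : {p : R * R | S p}) :
  proj1_sig p = proj1_sig q -> p = q.
Proof. by case: p => p hp; case: q => q hq /= e; subst q; apply: eq_exist. Qed.

Lemma pow_half_le (R : realType) n : (1 : R) / 2 ^+ n <= 1.
Proof.
rewrite ler_pdivrMr ?pow2_gt0 // mul1r.
by apply: exprn_ege1; lra.
Qed.

Fixpoint iterP (R : realType) (Y : Type) (lab : Y -> Mlab) (nxt : Y -> Y)
    (n : nat) (y : Y) : R * R :=
  match n with
  | 0 => @Tp R
  | n'.+1 => sig_map (lab y) (iterP R lab nxt n' (nxt y))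
  end.

Lemma iterP_D (R : realType) (Y : Type) (lab : Y -> Mlab) (nxt : Y -> Y) n y :
  inD (iterP R lab nxt n y).
Proof.
elim: n y => [|n IH] y /=; first exact: inD_T.
exact: inD_sig.
Qed.

Lemma iterP_S (R : realType) (S : set (R * R)) (Y : Type) (lab : Y -> Mlab) (nxt : Y -> Y) :
  S (@Tp R) ->
  S = sig_map Ma @` S `|` sig_map Mb @` S `|` sig_map Mc @` S ->
  forall n y, S (iterP R lab nxt n y).
Proof.
move=> ST Sfix; elim => [|n IH] y //=.
rewrite Sfix; case: (lab y).
- by left; left; exists (iterP R lab nxt n (nxt y)).
- by left; right; exists (iterP R lab nxt n (nxt y)).
- by right; exists (iterP R lab nxt n (nxt y)).
Qed.

Lemma iterP_cauchy (R : realType) (Y : Type) (lab : Y -> Mlab) (nxt : Y -> Y) :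
  forall n k y, euclid (iterP R lab nxt (n + k) y) (iterP R lab nxt n y) <= 1 / 2 ^+ n.
Proof.
elim => [|n IH] k y.
- by rewrite expr0 divr1; apply: euclid_le1; apply: iterP_D.
- rewrite addSn /= euclid_sig half_pow.
  have := IH k (nxt y); lra.
Qed.

Lemma iterP_lim (R : realType) (Y : Type) (lab : Y -> Mlab) (nxt : Y -> Y) y :
  exists l : R * R, forall n,
    `|l.1 - (iterP R lab nxt n y).1| <= 1 / 2 ^+ n /\
    `|l.2 - (iterP R lab nxt n y).2| <= 1 / 2 ^+ n.
Proof.
have [l1 h1] := @lim_seq R (fun n => (iterP R lab nxt n y).1) 1
  (fun n k => le_trans (euclid_coord1 _ _) (@iterP_cauchy R Y lab nxt n k y)).
have [l2 h2] := @lim_seq R (fun n => (iterP R lab nxt n y).2) 1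
  (fun n k => le_trans (euclid_coord2 _ _) (@iterP_cauchy R Y lab nxt n k y)).
by exists (l1, l2) => n; split; [apply: h1 | apply: h2].
Qed.


Lemma corner_gp (X : Type) (T L Rt : X) m m' : m <> m' ->
  gp T L Rt (m, corner T L Rt m m') (m', corner T L Rt m' m) \/
  gp T L Rt (m', corner T L Rt m' m) (m, corner T L Rt m m').
Proof. by rewrite /gp; case: m; case: m' => //= _; tauto. Qed.

Lemma glue_of_gp (X : Type) (T L Rt : X) p q :
  gp T L Rt p q \/ gp T L Rt q p -> Defs.glue T L Rt p q.
Proof.
case=> h; first by apply: rst_step; apply/glue0_gp.
by apply: rst_sym; apply: rst_step; apply/glue0_gp.
Qed.

Lemma val_corner (R : realType) (S : set (R * R)) (pT pL pR : {p : R * R | S p}) :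
  proj1_sig pT = @Tp R -> proj1_sig pL = @Lp R -> proj1_sig pR = @Rp R ->
  forall m m', proj1_sig (corner pT pL pR m m') = corner (@Tp R) (@Lp R) (@Rp R) m m'.
Proof. by move=> hT hL hR; case; case. Qed.

Lemma sig_glue (R : realType) (S : set (R * R)) (S_cpt : compact S)
  (S_fix : S = sig_map Ma @` S `|` sig_map Mb @` S `|` sig_map Mc @` S)
  (pT pL pR : {p : R * R | S p}) :
  proj1_sig pT = @Tp R -> proj1_sig pL = @Lp R -> proj1_sig pR = @Rp R ->
  forall m m' (x x' : {p : R * R | S p}),
  sig_map m (proj1_sig x) = sig_map m' (proj1_sig x') ->
  tens pT pL pR m x = tens pT pL pR m' x'.
Proof.
move=> hT hL hR m m' x x' e.
have hD := S_in_D S_cpt S_fix.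
have [[-> /sval_inj ->] //|[ne [e1 e2]]] :=
  sig_inj (hD _ (proj2_sig x)) (hD _ (proj2_sig x')) e.
have vc := val_corner hT hL hR.
rewrite -vc in e1; rewrite -vc in e2.
move/sval_inj: e1 => ->; move/sval_inj: e2 => ->.
apply/tens_eq; apply: glue_of_gp; exact: corner_gp.
Qed.

Lemma sigma_rep (R : realType) (S : set (R * R)) (pT pL pR : {p : R * R | S p})
  (sigma : {p : R * R | S p} -> Tens pT pL pR) :
  (forall s m x, sigma s = tens pT pL pR m x -> sig_map m (proj1_sig x) = proj1_sig s) ->
  forall s, exists m x, sigma s = tens pT pL pR m x /\ sig_map m (proj1_sig x) = proj1_sig s.
Proof.
move=> hs s; have [m [x e]] := tens_surj (sigma s).
by exists m, x; split => //; apply: hs.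
Qed.

Lemma S_tripointed (R : realType) (S : set (R * R)) (S_cpt : compact S)
  (S_fix : S = sig_map Ma @` S `|` sig_map Mb @` S `|` sig_map Mc @` S)
  (pT pL pR : {p : R * R | S p}) :
  proj1_sig pT = @Tp R -> proj1_sig pL = @Lp R -> proj1_sig pR = @Rp R ->
  is_tripointed_metric (fun p q : {p : R * R | S p} => euclid (proj1_sig p) (proj1_sig q))
    pT pL pR.
Proof.
move=> hT hL hR.
have hD := S_in_D S_cpt S_fix.
have [s2 [s1 s3]] := sqrt3_facts R.
split; split.
- by move=> x y; apply: euclid_ge0.
- move=> x y; split; first by move/euclid_eq0; apply: sval_inj.
  by move=> ->; apply/euclid_eq0.
- by move=> x y; apply: euclid_sym.
- by move=> x y z; apply: euclid_tri.
- by move=> x y; apply: euclid_le1; apply: hD; apply: proj2_sig.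
- by move=> e; move: (congr1 (@proj1_sig _ _) e); rewrite hT hL => -[]; lra.
- by move=> e; move: (congr1 (@proj1_sig _ _) e); rewrite hT hR => -[]; lra.
- by move=> e; move: (congr1 (@proj1_sig _ _) e); rewrite hL hR => -[]; lra.
- rewrite hT hL hR /euclid /Tp /Lp /Rp /=; split.
  + have -> : (1 / 2 - 0) ^+ 2 + (Num.sqrt 3 / 2 - 0) ^+ 2 = (1 : R).
      by rewrite !subr0; nra.
    exact: sqrtr1.
  + have -> : (1 / 2 - 1) ^+ 2 + (Num.sqrt 3 / 2 - 0) ^+ 2 = (1 : R).
      by rewrite !subr0; nra.
    exact: sqrtr1.
  + have -> : (0 - 1) ^+ 2 + (0 - 0) ^+ 2 = (1 : R) by rewrite subrr; ring.
    exact: sqrtr1.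
Qed.


Lemma sig_fix_T (R : realType) : sig_map Ma (@Tp R) = @Tp R.
Proof. by rewrite /Tp /=; congr pair; lra. Qed.
Lemma sig_fix_L (R : realType) : sig_map Mb (@Lp R) = @Lp R.
Proof. by rewrite /Lp /=; congr pair; lra. Qed.
Lemma sig_fix_R (R : realType) : sig_map Mc (@Rp R) = @Rp R.
Proof. by rewrite /Rp /=; congr pair; lra. Qed.

Lemma sigma_coalg (R : realType) (S : set (R * R)) (S_cpt : compact S)
  (S_fix : S = sig_map Ma @` S `|` sig_map Mb @` S `|` sig_map Mc @` S)
  (pT pL pR : {p : R * R | S p})
  (hT : proj1_sig pT = @Tp R) (hL : proj1_sig pL = @Lp R) (hR : proj1_sig pR = @Rp R)
  (sigma : {p : R * R | S p} -> Tens pT pL pR)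
  (sigma_inv_tau : forall s m x, sigma s = tens pT pL pR m x ->
                     sig_map m (proj1_sig x) = proj1_sig s) :
  @is_coalgebra R {p : R * R | S p}
     (fun p q : {p : R * R | S p} => euclid (proj1_sig p) (proj1_sig q)) pT pL pR sigma.
Proof.
set dS := fun p q : {p : R * R | S p} => euclid (proj1_sig p) (proj1_sig q).
have hD := S_in_D S_cpt S_fix.
have d0 : forall x y, 0 <= dS x y by move=> x y; apply: euclid_ge0.
have rep := sigma_rep sigma_inv_tau.
have sg := sig_glue S_cpt S_fix hT hL hR.
have vc := val_corner hT hL hR.
have key : forall s s', dtens dS (sigma s) (sigma s') <= 2 * dS s s'.
  move=> s s'.
  have [m [x [es hs]]] := rep s; have [m' [x' [es' hs']]] := rep s'.
  rewrite es es' /dS -hs -hs'.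
  case: (Mlab_eqbP m m') => [e|ne].
  - subst m'; apply: le_trans (dtens_le d0 (chain_one dS pT pL pR (m, x) (m, x'))) _.
    rewrite dprod_same /dS euclid_sig.
    have := euclid_ge0 (proj1_sig x) (proj1_sig x'); lra.
  - set c := corner pT pL pR m m'; set c' := corner pT pL pR m' m.
    have g : Defs.glue pT pL pR (m, c) (m', c') by apply: glue_of_gp; exact: corner_gp.
    have ch := @chain_cons R _ dS pT pL pR (m, x) (m, c) (m', c') (m', x') _ g
                 (chain_one dS pT pL pR (m', c') (m', x')).
    apply: le_trans (dtens_le d0 ch) _.
    rewrite !dprod_same /dS /c /c' !vc.
    apply: sigma_geo => //; apply: hD; apply: proj2_sig.
split.
- move=> s e e0; exists (e / 2); first by lra.
  move=> s' hs'; apply: le_lt_trans (key s s') _; rewrite /dS in hs' *; lra.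
- have [m [x [es hs]]] := rep pT; rewrite es /tensT; apply: sg.
  by rewrite hs hT sig_fix_T.
- have [m [x [es hs]]] := rep pL; rewrite es /tensL; apply: sg.
  by rewrite hs hL sig_fix_L.
- have [m [x [es hs]]] := rep pR; rewrite es /tensR; apply: sg.
  by rewrite hs hR sig_fix_R.
Qed.


Lemma minr_l (R : realType) (a b : R) : Num.min a b <= a.
Proof. by rewrite ge_min lexx. Qed.
Lemma minr_r (R : realType) (a b : R) : Num.min a b <= b.
Proof. by rewrite ge_min lexx orbT. Qed.
Lemma minr_gt0 (R : realType) (a b : R) : 0 < a -> 0 < b -> 0 < Num.min a b.
Proof. by move=> a0 b0; rewrite lt_min a0 b0. Qed.

Lemma final (R : realType) (S : set (R * R)) (S_cpt : compact S)
  (S_fix : S = sig_map Ma @` S `|` sig_map Mb @` S `|` sig_map Mc @` S)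
  (pT pL pR : {p : R * R | S p})
  (hT : proj1_sig pT = @Tp R) (hL : proj1_sig pL = @Lp R) (hR : proj1_sig pR = @Rp R)
  (sigma : {p : R * R | S p} -> Tens pT pL pR)
  (sigma_inv_tau : forall s m x, sigma s = tens pT pL pR m x ->
                     sig_map m (proj1_sig x) = proj1_sig s) :
  @is_final_coalgebra R {p : R * R | S p}
     (fun p q : {p : R * R | S p} => euclid (proj1_sig p) (proj1_sig q)) pT pL pR sigma.
Proof.
set dS := fun p q : {p : R * R | S p} => euclid (proj1_sig p) (proj1_sig q).
have hD := S_in_D S_cpt S_fix.
have rep := sigma_rep sigma_inv_tau.
have sg := sig_glue S_cpt S_fix hT hL hR.
move=> Y alpha [acont aT aL aR].
set dY := @m3dist R Y; set TY := m3T Y; set LY := m3L Y; set RY := m3R Y.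
have HY : is_tripointed_metric dY TY LY RY := m3ax Y.
have := HY => -[[d0 deq dsym dtri d1] [nTL nTR nLR [dTL dTR dLR]]].
have dxx : forall x, dY x x = 0 by move=> x; apply/deq.
have : forall y, exists mx : Mlab * Y, alpha y = tens TY LY RY mx.1 mx.2.
  by move=> y; have [m [x e]] := tens_surj (alpha y); exists (m, x).
case/choice => f hf.
set lab := fun y => (f y).1; set nxt := fun y => (f y).2.
have hf' : forall y, alpha y = tens TY LY RY (lab y) (nxt y) by [].
clearbody lab nxt; clear hf.
set P := iterP R lab nxt.
have ST : S (@Tp R) by rewrite -hT; exact: proj2_sig.
have PS := iterP_S lab nxt ST S_fix.
have : forall y, exists l : R * R, forall n,
    `|l.1 - (P n y).1| <= 1 / 2 ^+ n /\ `|l.2 - (P n y).2| <= 1 / 2 ^+ n.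
  by move=> y; apply: iterP_lim.
case/choice => hp hlim.
have hpS : forall y, S (hp y).
  move=> y; apply: (S_closed S_cpt) => e e0.
  have [n hn] := exists_pow e0.
  exists (P n y); split; first exact: PS.
  have [a b] := hlim y n; split; lra.
have hpD : forall y, inD (hp y) by move=> y; apply: hD.
have hrec : forall y, hp y = sig_map (lab y) (hp (nxt y)).
  move=> y; rewrite [hp y]surjective_pairing [sig_map _ _]surjective_pairing.
  congr pair; apply: (@eq_of_small _ _ _ 1) => n.
  - have [a _] := hlim y n.+1; have [b _] := hlim (nxt y) n.
    have e := sig_diff1 (lab y) (P n (nxt y)) (hp (nxt y)).
    move: a b e; rewrite /= half_pow; set Pn := P n (nxt y); set w := 1 / 2 ^+ n.
    rewrite !ler_norml => /andP[a1 a2] /andP[b1 b2] e; apply/andP; split; lra.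
  - have [_ a] := hlim y n.+1; have [_ b] := hlim (nxt y) n.
    have e := sig_diff2 (lab y) (P n (nxt y)) (hp (nxt y)).
    move: a b e; rewrite /= half_pow; set Pn := P n (nxt y); set w := 1 / 2 ^+ n.
    rewrite !ler_norml => /andP[a1 a2] /andP[b1 b2] e; apply/andP; split; lra.
have cornerY : forall c mc, alpha c = tens TY LY RY mc c ->
    (forall q, ~ gp TY LY RY (mc, c) q) -> (forall q, ~ gp TY LY RY q (mc, c)) ->
    lab c = mc /\ nxt c = c.
  move=> c mc ac n1 n2.
  have : Defs.glue TY LY RY (mc, c) (lab c, nxt c) by apply/tens_eq; rewrite -ac.
  move/(glue_char _ _ nTL nTR nLR) => [e|[g|g]].
  - by case: e.
  - by case: (n1 _ g).
  - by case: (n2 _ g).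
have [labT nxtT] : lab TY = Ma /\ nxt TY = TY.
  apply: cornerY => //; rewrite /gp => q; intuition congruence.
have [labL nxtL] : lab LY = Mb /\ nxt LY = LY.
  apply: cornerY => //; rewrite /gp => q; intuition congruence.
have [labR nxtR] : lab RY = Mc /\ nxt RY = RY.
  apply: cornerY => //; rewrite /gp => q; intuition congruence.
have hpT : hp TY = @Tp R.
  have := hrec TY; rewrite labT nxtT; case: (hp TY) => a b /= [e1 e2].
  by rewrite /Tp; congr pair; lra.
have hpL : hp LY = @Lp R.
  have := hrec LY; rewrite labL nxtL; case: (hp LY) => a b /= [e1 e2].
  by rewrite /Lp; congr pair; lra.
have hpR : hp RY = @Rp R.
  have := hrec RY; rewrite labR nxtR; case: (hp RY) => a b /= [e1 e2].
  by rewrite /Rp; congr pair; lra.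
have hp_corner : forall a b, hp (corner TY LY RY a b) = corner (@Tp R) (@Lp R) (@Rp R) a b.
  by case; case.
have hrep : forall y m x, alpha y = tens TY LY RY m x -> hp y = sig_map m (hp x).
  move=> y m x ay.
  have : Defs.glue TY LY RY (lab y, nxt y) (m, x) by apply/tens_eq; rewrite -ay.
  move/(glue_char _ _ nTL nTR nLR) => [e|gg].
  - by case: e => <- <-; apply: hrec.
  - have [ne [e1 e2]] := gp_corner gg; simpl in *.
    rewrite hrec e1 e2 !hp_corner; exact: corner_glue_pt.
pose h := fun y => exist S (hp y) (hpS y).
have near : forall y (e : R), 0 < e -> e <= 1/2 -> exists2 dl : R, 0 < dl &
    forall y', dY y y' < dl -> cbound dY TY LY RY (lab y, nxt y) (lab y', nxt y') < e.
  move=> y e e0 e12; have [dl dl0 hdl] := acont y e e0.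
  exists dl => // y' hy'; have := hdl y' hy'; rewrite (hf' y) (hf' y').
  move=> /(dtens_lt dxx) [r [c hr]].
  have := chain_lb HY c (lt_le_trans hr e12); lra.
have Cn : forall n c mc, lab c = mc -> nxt c = c ->
    (forall m', m' <> mc -> dY c (corner TY LY RY mc m') = 1) ->
    exists2 dl : R, 0 < dl & forall y', dY c y' < dl -> euclid (hp c) (hp y') <= 1 / 2 ^+ n.
  elim => [|n IH] c mc hl hn hc.
  - exists 1 => // y' _; rewrite expr0 divr1; exact: euclid_le1.
  - have [dn dn0 hdn] := IH c mc hl hn hc.
    set e := Num.min (1/4) (dn / 2).
    have e0 : 0 < e by apply: minr_gt0; lra.
    have e1 : e <= 1/4 := minr_l _ _.
    have e2 : e <= dn / 2 := minr_r _ _.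
    have [dl dl0 hdl] := near c e e0 ltac:(lra).
    exists dl => // y' hy'; have := hdl y' hy'; rewrite /cbound /= hl hn.
    case: (Mlab_eqbP mc (lab y')) => [E|NE] cb.
    + have H1 := hdn (nxt y') ltac:(lra).
      rewrite (hrec c) (hrec y') hl hn -E euclid_sig half_pow.
      move: H1; set w := 1 / 2 ^+ n; lra.
    + have NE' : lab y' <> mc by move=> E; apply: NE.
      have := hc _ NE'; have := d0 (corner TY LY RY (lab y') mc) (nxt y'); lra.
have CT := fun n => Cn n TY Ma labT nxtT.
have CL := fun n => Cn n LY Mb labL nxtL.
have CR := fun n => Cn n RY Mc labR nxtR.
have Gn : forall n y, exists2 dl : R, 0 < dl &
    forall y', dY y y' < dl -> euclid (hp y) (hp y') <= 1 / 2 ^+ n.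
  elim => [|n IH] y.
  - exists 1 => // y' _; rewrite expr0 divr1; exact: euclid_le1.
  - have [dx dx0 hdx] := IH (nxt y).
    have [dT dT0 hdT] := CT n.+1 ltac:(case => // _ /=; first [done | by rewrite dsym]).
    have [dL dL0 hdL] := CL n.+1 ltac:(case => // _ /=; first [done | by rewrite dsym]).
    have [dR dR0 hdR] := CR n.+1 ltac:(case => // _ /=; first [done | by rewrite dsym]).
    set dc := Num.min dT (Num.min dL dR).
    have dc0 : 0 < dc by apply: minr_gt0 => //; apply: minr_gt0.
    have Cc : forall a b z, dY (corner TY LY RY a b) z < dc ->
        euclid (hp (corner TY LY RY a b)) (hp z) <= 1 / 2 ^+ n.+1.
      have h1 : dc <= dT := minr_l _ _.
      have h2 : dc <= dL := le_trans (minr_r _ _) (minr_l _ _).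
      have h3 : dc <= dR := le_trans (minr_r _ _) (minr_r _ _).
      case; case => z hz /=;
        first [ apply: hdT; lra | apply: hdL; lra | apply: hdR; lra ].
    set e := Num.min (1/4) (Num.min dx dc / 2).
    have e0 : 0 < e by apply: minr_gt0; [lra | apply: divr_gt0 => //; apply: minr_gt0].
    have e1 : e <= 1/4 := minr_l _ _.
    have e2 : e <= dx / 2 by apply: le_trans (minr_r _ _) _; have := minr_l dx dc; lra.
    have e3 : e <= dc / 2 by apply: le_trans (minr_r _ _) _; have := minr_r dx dc; lra.
    have [dl dl0 hdl] := near y e e0 ltac:(lra).
    exists dl => // y' hy'; have := hdl y' hy'; rewrite /cbound /=.
    case: (Mlab_eqbP (lab y) (lab y')) => [E|NE] cb.
    + have H1 := hdx (nxt y') ltac:(lra).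
      rewrite (hrec y) (hrec y') -E euclid_sig half_pow.
      move: H1; set w := 1 / 2 ^+ n; lra.
    + set c := corner TY LY RY (lab y) (lab y'); set c' := corner TY LY RY (lab y') (lab y).
      have q1 := d0 (nxt y) c; have q2 := d0 c' (nxt y').
      have k1 : euclid (hp c) (hp (nxt y)) <= 1 / 2 ^+ n.+1.
        by apply: Cc; rewrite dsym; lra.
      have k2 : euclid (hp c') (hp (nxt y')) <= 1 / 2 ^+ n.+1.
        by apply: Cc; lra.
      have G : sig_map (lab y) (hp c) = sig_map (lab y') (hp c').
        by rewrite /c /c' !hp_corner; apply: corner_glue_pt.
      rewrite (hrec y) (hrec y').
      have tri := euclid_tri (sig_map (lab y) (hp (nxt y))) (sig_map (lab y) (hp c))
                   (sig_map (lab y') (hp (nxt y'))).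
      rewrite euclid_sig G euclid_sig in tri.
      rewrite euclid_sym in k1.
      move: tri k1 k2; rewrite half_pow; set w := 1 / 2 ^+ n; lra.
have hcont : met_continuous dY dS h.
  move=> y e e0; have [n hn] := exists_pow e0.
  have [dl dl0 hdl] := Gn n y.
  exists dl => // y' hy'; have := hdl y' hy'; rewrite /dS /h /=; lra.
exists h; split.
- split; first split.
  + exact: hcont.
  + by apply: sval_inj; rewrite /h /= hpT hT.
  + by apply: sval_inj; rewrite /h /= hpL hL.
  + by apply: sval_inj; rewrite /h /= hpR hR.
  + move=> y m x ay.
    have e := hrep y m x ay.
    have [m0 [x0 [es hs]]] := rep (h y).
    rewrite es; apply: sg; rewrite hs /h /=; exact: e.
- move=> g [ghom gF].
  have grec : forall y, proj1_sig (g y) = sig_map (lab y) (proj1_sig (g (nxt y))).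
    by move=> y; rewrite (sigma_inv_tau _ _ _ (gF y _ _ (hf' y))).
  have gD : forall y, inD (proj1_sig (g y)) by move=> y; apply: hD; apply: proj2_sig.
  have claim : forall n y, euclid (hp y) (proj1_sig (g y)) <= 1 / 2 ^+ n.
    elim => [|n IH] y; first by rewrite expr0 divr1; apply: euclid_le1.
    rewrite hrec grec euclid_sig half_pow; have := IH (nxt y); lra.
  apply: funext => y; apply: sval_inj; rewrite /h /=.
  apply/euclid_eq0; apply/eqP; rewrite eq_le euclid_ge0 andbT.
  exact: small_zero (claim^~ y).
Qed.

Unset Implicit Arguments.

Theorem mainTheorem10 (R : realType) (S : set (R * R))
  (S_ne : S !=set0) (S_cpt : compact S)
  (S_fix : S = sig_map Ma @` S `|` sig_map Mb @` S `|` sig_map Mc @` S)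
  (pT pL pR : {p : R * R | S p})
  (hT : proj1_sig pT = (1 / 2, Num.sqrt 3 / 2))
  (hL : proj1_sig pL = (0, 0))
  (hR : proj1_sig pR = (1, 0))
  (sigma : {p : R * R | S p} -> Tens pT pL pR)
  (sigma_inv_tau : forall s m x, sigma s = tens pT pL pR m x ->
                     sig_map m (proj1_sig x) = proj1_sig s) :
  let dS := fun p q : {p : R * R | S p} => euclid (proj1_sig p) (proj1_sig q) in
  [/\ @is_tripointed_metric R {p : R * R | S p} dS pT pL pR,
      @is_coalgebra R {p : R * R | S p} dS pT pL pR sigma
    & @is_final_coalgebra R {p : R * R | S p} dS pT pL pR sigma].
Proof.
move=> dS; split.
- exact: (S_tripointed S_cpt S_fix hT hL hR).
- exact: (sigma_coalg S_cpt S_fix hT hL hR sigma_inv_tau).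
- exact: (final S_cpt S_fix hT hL hR sigma_inv_tau).
Qed.
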